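(* Consider the controlled mechanical system on $G$ $$\dot g=T_eR_g(\xi),\qquad \dot\xi+\sharp\big[\mathrm{ad}^*_\xi\flat(\xi)\big]=\sum_{a=1}^m u^af_a,$$ where $f_1,\dots,f_m\in\mathfrak{g}$ are linearly independent, $\mathfrak{f}=\mathrm{span}\{f_1,\dots,f_m\}$, $m<n=\dim\mathfrak{g}$. Let $\mathfrak{d}\subseteq\mathfrak{g}$ be a subspace with $\mathfrak{g}=\mathfrak{f}\oplus\mathfrak{d}$. For $\xi\in\mathfrak{g}$ write uniquely $\sharp[\mathrm{ad}^*_\xi\flat(\xi)]=\eta(\xi)+\sum_b\tau^b(\xi)f_b$ with $\eta(\xi)\in\mathfrak{d}$, and define the feedback $u^*(\xi)=(\tau^1(\xi),\dots,\tau^m(\xi))$. Then $u^*$ makes $\mathfrak{d}$ a virtual nonholonomic constraint: every solution of the closed-loop system with $u=u^*(\xi)$ and $\xi(0)\in\mathfrak{d}$ satisfies $\xi(t)\in\mathfrak{d}$ for all $t\ge0$. Moreover, this control law is unique: if $\xi(t)$ is a solution of the system for some control $u(t)$ with $\xi(t)\in\mathfrak{d}$ for all $t$, then $u(t)=u^*(\xi(t))$ for all $t$.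
   Context: $G$ is a Lie group of dimension $n$ with Lie algebra $\mathfrak{g}=T_eG$, $R_g(h)=hg$, and $\langle\cdot,\cdot\rangle$ is an inner product on $\mathfrak{g}$ (inducing a right-invariant metric on $G$). $\flat:\mathfrak{g}\to\mathfrak{g}^*$, $\flat(\xi)(\eta)=\langle\xi,\eta\rangle$, $\sharp=\flat^{-1}$; $\mathrm{ad}^*_\xi$ is the dual of $\mathrm{ad}_\xi=[\xi,\cdot]$. A virtual nonholonomic constraint for the system is a subspace $\mathfrak{d}\subseteq\mathfrak{g}$ that is controlled invariant: there is a control law such that solutions of the closed-loop system with $\xi(0)\in\mathfrak{d}$ satisfy $\xi(t)\in\mathfrak{d}$ for all $t\ge0$. *)

(* Defs.v *)
From HB Require Import structures.
From mathcomp Require Import all_boot all_order all_algebra.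
From mathcomp Require Import all_classical all_reals all_analysis.
Set Implicit Arguments. Unset Strict Implicit. Unset Printing Implicit Defensive.
Import Order.TTheory GRing.Theory Num.Theory.
Local Open Scope ring_scope.

(* The Lie algebra g is modelled as R^n = 'rV[R]_n (n = dim g). *)

Definition is_lie_bracket (R : realType) (n : nat)
  (br : 'rV[R]_n -> 'rV[R]_n -> 'rV[R]_n) : Prop :=
  [/\ (forall (a : R) x y z, br (a *: x + y) z = a *: br x z + br y z),
      (forall x y, br x y = - br y x) &
      (forall x y z, br x (br y z) + br y (br z x) + br z (br x y) = 0)].

Definition is_inner_product (R : realType) (n : nat)
  (ip : 'rV[R]_n -> 'rV[R]_n -> R) : Prop :=
  [/\ (forall (a : R) x y z, ip (a *: x + y) z = a * ip x z + ip y z),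
      (forall x y, ip x y = ip y x) &
      (forall x, x != 0 -> 0 < ip x x)].

(* Covectors (elements of g^* ) are represented as functions g -> R
   (they are only ever applied to linear ones). *)
Definition flat (R : realType) (n : nat) (ip : 'rV[R]_n -> 'rV[R]_n -> R)
  (x : 'rV[R]_n) : 'rV[R]_n -> R := fun z => ip x z.

Definition coad (R : realType) (n : nat) (br : 'rV[R]_n -> 'rV[R]_n -> 'rV[R]_n)
  (x : 'rV[R]_n) (alpha : 'rV[R]_n -> R) : 'rV[R]_n -> R :=
  fun z => alpha (br x z).

(* sharp = flat^{-1}: the (unique, for an inner product) w with <w, .> = alpha. *)
Definition sharp (R : realType) (n : nat) (ip : 'rV[R]_n -> 'rV[R]_n -> R)
  (alpha : 'rV[R]_n -> R) : 'rV[R]_n :=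
  xget 0 [set w | forall z, ip w z = alpha z].

Definition EP (R : realType) (n : nat) (br : 'rV[R]_n -> 'rV[R]_n -> 'rV[R]_n)
  (ip : 'rV[R]_n -> 'rV[R]_n -> R) (x : 'rV[R]_n) : 'rV[R]_n :=
  sharp ip (coad br x (flat ip x)).

(* The f-coefficients tau(xi) in  EP(xi) = eta(xi) + sum_b tau^b(xi) f_b,
   eta(xi) in d.  Rows of F are f_1..f_m; the row space of D is d. *)
Definition ustar (R : realType) (n m : nat) (br : 'rV[R]_n -> 'rV[R]_n -> 'rV[R]_n)
  (ip : 'rV[R]_n -> 'rV[R]_n -> R) (F : 'M[R]_(m, n)) (D : 'M[R]_n)
  (x : 'rV[R]_n) : 'rV[R]_m :=
  xget 0 [set c : 'rV[R]_m | (EP br ip x - c *m F <= D)%MS].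

Definition is_solution (R : realType) (n m : nat)
  (br : 'rV[R]_n -> 'rV[R]_n -> 'rV[R]_n) (ip : 'rV[R]_n -> 'rV[R]_n -> R)
  (F : 'M[R]_(m, n)) (u : R -> 'rV[R]_m) (xi : R -> 'rV[R]_n) : Prop :=
  forall t : R, 0 <= t ->
    derivable xi t 1 /\ 'D_1 xi t + EP br ip (xi t) = u t *m F.

(* Main.v *)
Require Import Defs.
From HB Require Import structures.
From mathcomp Require Import all_boot all_order all_algebra.
From mathcomp Require Import all_classical all_reals all_analysis.
Import Order.TTheory GRing.Theory Num.Theory.
Local Open Scope ring_scope.
Import numFieldNormedType.Exports.
Local Open Scope classical_set_scope.

Lemma derive_zero_right (R : realType) (V : normedModType R) (h : R -> V) t :
  0 <= t -> derivable h t 1 -> (forall s, 0 <= s -> h s = 0) -> 'D_1 h t = 0.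
Proof.
move=> t0 dh h0.
rewrite /derive cvg_at_rightE //.
apply: cvg_lim => //.
apply: cvg_near_cst.
near=> s.
have s0 : 0 < s by near: s; exact: nbhs_right_gt.
rewrite /= h0; last by rewrite /shift /= addr_ge0 // ?mulr1 ?scaler1 ?mulr1 // ltW.
by rewrite h0 // subrr scaler0.
Unshelve. all: by end_near. Qed.

Lemma const_right (R : realType) (g : R -> R) :
  (forall s, 0 <= s -> derivable g s 1 /\ 'D_1 g s = 0) ->
  forall t, 0 <= t -> g t = g 0.
Proof.
move=> Hg t t0.
have [] := @MVT_segment R g (fun _ => 0) 0 t t0.
- move=> x; rewrite in_itv /= => /andP[x0 _].
  have [dx Dx] := Hg x (ltW x0).
  by rewrite -Dx; apply: derivableP.
- apply: continuous_in_subspaceT => x; rewrite inE /= in_itv /= => /andP[x0 _].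
  have [dx _] := Hg x x0.
  exact/differentiable_continuous/derivable1_diffP.
- by move=> c _; rewrite mul0r => /eqP; rewrite subr_eq0 => /eqP.
Qed.

Lemma derive_mulmx (R : realType) n p (xi : R -> 'rV[R]_n) (K : 'M[R]_(n, p)) t :
  derivable xi t 1 ->
  derivable (fun s => xi s *m K) t 1 /\ 'D_1 (fun s => xi s *m K) t = 'D_1 xi t *m K.
Proof.
move=> dxi.
have dc := (derivable_mxP xi t 1).1 dxi.
have E i j : (fun s => (xi s *m K) i j) = \sum_(k < n) (fun s => xi s i k * K k j).
  apply/funext => s; rewrite fct_sumE !mxE; done.
have dk i j k : derivable (fun s => xi s i k * K k j) t 1.
  exact: derivableM.
have D1 : derivable (fun s => xi s *m K) t 1.
  by apply/derivable_mxP => i j; rewrite E; apply: derivable_sum.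
split => //.
rewrite derive_mx // [in RHS]derive_mx //; apply/matrixP => i j; rewrite !mxE E.
rewrite derive_sum //; apply: eq_bigr => k _; rewrite !mxE.
rewrite deriveM //.
by rewrite derive_cst scaler0 add0r mulrC.
Qed.

Theorem theorem5 (R : realType) (n m : nat)
  (br : 'rV[R]_n -> 'rV[R]_n -> 'rV[R]_n) (ip : 'rV[R]_n -> 'rV[R]_n -> R)
  (F : 'M[R]_(m, n)) (D : 'M[R]_n) :
  is_lie_bracket br -> is_inner_product ip ->
  (m < n)%N -> row_free F ->
  mxdirect (F + D) -> (F + D == 1%:M)%MS ->
  (forall xi : R -> 'rV[R]_n,
      is_solution br ip F (fun t => ustar br ip F D (xi t)) xi ->
      (xi 0 <= D)%MS ->
      forall t : R, 0 <= t -> (xi t <= D)%MS) /\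
  (forall (u : R -> 'rV[R]_m) (xi : R -> 'rV[R]_n),
      is_solution br ip F u xi ->
      (forall t : R, 0 <= t -> (xi t <= D)%MS) ->
      forall t : R, 0 <= t -> u t = ustar br ip F D (xi t)).
Proof.
move=> _ _ _ rfF dir HFD.
have Hus x : (EP br ip x - ustar br ip F D x *m F <= D)%MS.
  rewrite /ustar; apply: (@xgetPex _ 0 [set c : 'rV[R]_m | (EP br ip x - c *m F <= D)%MS]).
  have : (EP br ip x <= F + D)%MS by rewrite (eqmxP HFD) submx1.
  move=> /sub_addsmxP [[a b] /= ->]; exists a => /=.
  by rewrite addrAC subrr add0r submxMl.
set K := cokermx D.
split.
- move=> xi sol xi0 t t0.
  have Hd s : 0 <= s -> derivable (fun s => xi s *m K) s 1 /\
      'D_1 (fun s => xi s *m K) s = 0.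
    move=> s0; have [dx Dx] := sol s s0.
    have [d1 D1] := @derive_mulmx _ _ _ _ K _ dx; split => //; rewrite D1.
    have -> : 'D_1 xi s = - (EP br ip (xi s) - ustar br ip F D (xi s) *m F).
      by rewrite -Dx opprB addrK.
    by apply/eqP; rewrite mulNmx oppr_eq0 -submxE.
  rewrite submxE; apply/eqP/matrixP => i j; rewrite [RHS]mxE.
  have Hc : forall s, 0 <= s -> derivable (fun s => (xi s *m K) i j) s 1 /\
      'D_1 (fun s => (xi s *m K) i j) s = 0.
    move=> s s0; have [d1 D1] := Hd s s0.
    split; first by move: d1 => /derivable_mxP; apply.
    by move: (derive_mx d1); rewrite D1 => /matrixP /(_ i j); rewrite !mxE.
  rewrite (@const_right R (fun s => (xi s *m K) i j) Hc t t0) /=.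
  by move: xi0; rewrite submxE => /eqP ->; rewrite mxE.
- move=> u xi sol xiD t t0.
  have [dx Dx] := sol t t0.
  have [d1 D1] := @derive_mulmx _ _ _ _ K _ dx.
  have h0 : 'D_1 (fun s => xi s *m K) t = 0.
    apply: derive_zero_right => // s s0; apply/eqP; rewrite -submxE; exact: xiD.
  have dD : ('D_1 xi t <= D)%MS by rewrite submxE -D1 h0.
  set c := ustar br ip F D (xi t).
  have E : (u t - c) *m F = 'D_1 xi t + (EP br ip (xi t) - c *m F).
    by rewrite mulmxBl -Dx addrA.
  have : ((u t - c) *m F <= F :&: D)%MS.
    by rewrite sub_capmx submxMl E addmx_sub // Hus.
  rewrite (mxdirect_addsP dir) submx0 => /eqP Z.
  apply/eqP; rewrite -subr_eq0; apply/eqP; apply: (row_free_inj rfF).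
  by rewrite Z mul0mx.
Qed.
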